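(* Let $1\le p\ne q<\infty$ and let $T\in B(\ell^p)$, $S\in B(\ell^q)$. If $T$ or $S$ is compact, then $T$ and $S$ are not equivalent after extension.
   Context: $\ell^p=\ell^p(\mathbb N)$ over $\mathbb C$; $B(X,Y)$ denotes bounded linear operators; invertibility means bounded inverse; $X\oplus Y$ is the $\ell^2$-direct sum and $\mathrm{id}_X$ the identity. Operators $T\in B(X)$ and $S\in B(Y)$ are equivalent after extension if there exist Banach spaces $X'$, $Y'$ and invertible $E\in B(Y\oplus Y',X\oplus X')$, $F\in B(X\oplus X',Y\oplus Y')$ with $\begin{bmatrix}T&0\\0&\mathrm{id}_{X'}\end{bmatrix}=E\begin{bmatrix}S&0\\0&\mathrm{id}_{Y'}\end{bmatrix}F$. *)

(* Defs.v *)
From Stdlib Require Import Reals Lra ClassicalEpsilon FunctionalExtensionality.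
Open Scope R_scope.

Definition C : Type := (R * R)%type.
Definition C0 : C := (0, 0).
Definition C1 : C := (1, 0).
Definition Cadd (a b : C) : C := (fst a + fst b, snd a + snd b).
Definition Copp (a : C) : C := (- fst a, - snd a).
Definition Cmul (a b : C) : C :=
  (fst a * fst b - snd a * snd b, fst a * snd b + snd a * fst b).
Definition Cabs (a : C) : R := sqrt (fst a * fst a + snd a * snd a).

(** Real power t^s for t >= 0, s > 0, with the convention 0^s = 0
    (Stdlib's Rpower 0 s = 1, which would be wrong here). *)
Definition rpow (t s : R) : R := if Rle_dec t 0 then 0 else Rpower t s.

(** Value of a convergent real series (arbitrary if divergent). *)
Definition ser_val (u : nat -> R) : R :=
  epsilon (inhabits 0) (fun l => infinite_sum u l).

(** A "normed space candidate": a carrier type, a membership predicate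
    carving out the actual space, vector operations over C, and a norm. *)
Record VS : Type := mkVS {
  car : Type;
  mem : car -> Prop;
  vzero : car;
  vadd : car -> car -> car;
  vopp : car -> car;
  vscal : C -> car -> car;
  vnorm : car -> R
}.

Arguments mem {v} _.
Arguments vzero {v}.
Arguments vadd {v} _ _.
Arguments vopp {v} _.
Arguments vscal {v} _ _.
Arguments vnorm {v} _.

Definition vsub {V : VS} (x y : car V) : car V := vadd x (vopp y).

Definition is_banach (V : VS) : Prop :=
  mem (@vzero V) /\
  (forall x y : car V, mem x -> mem y -> mem (vadd x y)) /\
  (forall x : car V, mem x -> mem (vopp x)) /\
  (forall (c : C) (x : car V), mem x -> mem (vscal c x)) /\
  (forall x y z : car V, mem x -> mem y -> mem z ->
      vadd x (vadd y z) = vadd (vadd x y) z) /\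
  (forall x y : car V, mem x -> mem y -> vadd x y = vadd y x) /\
  (forall x : car V, mem x -> vadd x vzero = x) /\
  (forall x : car V, mem x -> vadd x (vopp x) = vzero) /\
  (forall x : car V, mem x -> vscal C1 x = x) /\
  (forall (a b : C) (x : car V), mem x -> vscal a (vscal b x) = vscal (Cmul a b) x) /\
  (forall (a : C) (x y : car V), mem x -> mem y ->
      vscal a (vadd x y) = vadd (vscal a x) (vscal a y)) /\
  (forall (a b : C) (x : car V), mem x ->
      vscal (Cadd a b) x = vadd (vscal a x) (vscal b x)) /\
  (forall x : car V, mem x -> 0 <= vnorm x) /\
  (forall x : car V, mem x -> vnorm x = 0 -> x = vzero) /\
  (forall (a : C) (x : car V), mem x -> vnorm (vscal a x) = Cabs a * vnorm x) /\
  (forall x y : car V, mem x -> mem y -> vnorm (vadd x y) <= vnorm x + vnorm y) /\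
  (forall u : nat -> car V, (forall n, mem (u n)) ->
     (forall eps, eps > 0 -> exists N, forall m n, (m >= N)%nat -> (n >= N)%nat ->
         vnorm (vsub (u m) (u n)) < eps) ->
     exists l, mem l /\ Un_cv (fun n => vnorm (vsub (u n) l)) 0).

Definition lp (p : R) : VS := {|
  car := nat -> C;
  mem := fun x => exists l, infinite_sum (fun n => rpow (Cabs (x n)) p) l;
  vzero := fun _ => C0;
  vadd := fun x y n => Cadd (x n) (y n);
  vopp := fun x n => Copp (x n);
  vscal := fun c x n => Cmul c (x n);
  vnorm := fun x => rpow (ser_val (fun n => rpow (Cabs (x n)) p)) (1 / p)
|}.

Definition dsum (V W : VS) : VS := {|
  car := (car V * car W)%type;
  mem := fun z => mem (fst z) /\ mem (snd z);
  vzero := (vzero, vzero);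
  vadd := fun z z' => (vadd (fst z) (fst z'), vadd (snd z) (snd z'));
  vopp := fun z => (vopp (fst z), vopp (snd z));
  vscal := fun c z => (vscal c (fst z), vscal c (snd z));
  vnorm := fun z => sqrt (vnorm (fst z) ^ 2 + vnorm (snd z) ^ 2)
|}.

Definition bounded_op (V W : VS) (f : car V -> car W) : Prop :=
  (forall x, mem x -> mem (f x)) /\
  (forall x y, mem x -> mem y -> f (vadd x y) = vadd (f x) (f y)) /\
  (forall c x, mem x -> f (vscal c x) = vscal c (f x)) /\
  (exists M, forall x, mem x -> vnorm (f x) <= M * vnorm x).

Definition invertible_op (V W : VS) (f : car V -> car W) : Prop :=
  bounded_op V W f /\
  exists g : car W -> car V, bounded_op W V g /\
    (forall x, mem x -> g (f x) = x) /\ (forall y, mem y -> f (g y) = y).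

(** Compact operator: the image of the closed unit ball is relatively
    compact, written sequentially (every sequence in the unit ball has a
    subsequence whose image converges in W). *)
Definition compact_op (V W : VS) (f : car V -> car W) : Prop :=
  forall x : nat -> car V, (forall n, mem (x n) /\ vnorm (x n) <= 1) ->
  exists (phi : nat -> nat) (y : car W),
    (forall n, (phi n < phi (S n))%nat) /\ mem y /\
    Un_cv (fun n => vnorm (vsub (f (x (phi n))) y)) 0.

Definition op_dsum_id {V : VS} (W : VS) (f : car V -> car V)
  : car (dsum V W) -> car (dsum V W) := fun z => (f (fst z), snd z).

Definition equiv_after_ext (X Y : VS) (T : car X -> car X) (S : car Y -> car Y)
  : Prop :=
  exists (X' Y' : VS), is_banach X' /\ is_banach Y' /\
  exists (E : car (dsum Y Y') -> car (dsum X X'))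
         (F : car (dsum X X') -> car (dsum Y Y')),
    invertible_op (dsum Y Y') (dsum X X') E /\
    invertible_op (dsum X X') (dsum Y Y') F /\
    forall z, @mem (dsum X X') z ->
      op_dsum_id X' T z = E (op_dsum_id Y' S (F z)).

(* Main.v *)
From Stdlib Require Import Reals Lra Lia ClassicalEpsilon FunctionalExtensionality Classical ZArith.
Require Import Defs.
Open Scope R_scope.

Lemma rpow_ge0 t s : 0 <= rpow t s.
Proof. unfold rpow; destruct (Rle_dec t 0); [lra|unfold Rpower; left; apply exp_pos]. Qed.

Lemma rpow_pos t s : 0 < t -> rpow t s = Rpower t s.
Proof. intro h; unfold rpow; destruct (Rle_dec t 0); [lra|auto]. Qed.

Lemma rpow_gt0 t s : 0 < t -> 0 < rpow t s.
Proof. intro h; rewrite rpow_pos; auto; unfold Rpower; apply exp_pos. Qed.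

Lemma rpow_0 s : rpow 0 s = 0.
Proof. unfold rpow; destruct (Rle_dec 0 0); lra. Qed.

Lemma rpow_eq0 t s : 0 <= t -> rpow t s = 0 -> t = 0.
Proof. intros h e; destruct h as [h|h]; auto. pose proof (rpow_gt0 t s h); lra. Qed.

Lemma rpow_comp t a b : 0 <= t -> rpow (rpow t a) b = rpow t (a*b).
Proof.
  intros [h|h]; [|subst; rewrite !rpow_0; auto].
  rewrite (rpow_pos t a h), rpow_pos, rpow_pos; auto. apply Rpower_mult.
  unfold Rpower; apply exp_pos.
Qed.

Lemma rpow_1 t : 0 <= t -> rpow t 1 = t.
Proof. intros [h|h]; [rewrite rpow_pos; auto; apply Rpower_1; auto|subst; apply rpow_0]. Qed.

Lemma rpow_one s : rpow 1 s = 1.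
Proof. rewrite rpow_pos; [|lra]. unfold Rpower; rewrite ln_1, Rmult_0_r; apply exp_0. Qed.

Lemma rpow_inv t r : 0 <= t -> r <> 0 -> rpow (rpow t r) (1/r) = t.
Proof. intros h hr. rewrite rpow_comp; auto. replace (r*(1/r)) with 1 by (field; auto). apply rpow_1; auto. Qed.

Lemma rpow_mul a b s : 0 <= a -> 0 <= b -> rpow (a*b) s = rpow a s * rpow b s.
Proof.
  intros [ha|ha] [hb|hb]; try (subst; rewrite ?Rmult_0_l, ?Rmult_0_r, !rpow_0; ring).
  rewrite !rpow_pos; auto; [|nra]. symmetry; apply Rpower_mult_distr; auto.
Qed.

Lemma rpow_le a b s : 0 <= a <= b -> 0 <= s -> rpow a s <= rpow b s.
Proof.
  intros [[ha|ha] hab] hs.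
  - rewrite !rpow_pos; try lra. apply Rle_Rpower_l; lra.
  - subst; rewrite rpow_0; apply rpow_ge0.
Qed.

Lemma rpow_lt a b s : 0 <= a < b -> 0 < s -> rpow a s < rpow b s.
Proof.
  intros [[ha|ha] hab] hs.
  - rewrite !rpow_pos; try lra. apply Rlt_Rpower_l; lra.
  - subst; rewrite rpow_0; apply rpow_gt0; lra.
Qed.

Lemma rpow_le_inv a b s : 0 <= a -> 0 <= b -> 0 < s -> rpow a s <= rpow b s -> a <= b.
Proof.
  intros ha hb hs h. destruct (Rle_dec a b); auto.
  assert (rpow b s < rpow a s) by (apply rpow_lt; lra). lra.
Qed.

Lemma rpow_div a b s : 0 <= a -> 0 < b -> rpow (a/b) s = rpow a s / rpow b s.
Proof.
  intros ha hb. unfold Rdiv. rewrite rpow_mul; auto.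
  2:{ left; apply Rinv_0_lt_compat; auto. }
  f_equal. rewrite !rpow_pos; auto; [|apply Rinv_0_lt_compat; auto].
  replace (/ b) with (Rpower b (-1)). rewrite Rpower_mult. replace (-1 * s) with (- s) by ring. rewrite Rpower_Ropp; reflexivity. replace (-1) with (- (1)) by ring; rewrite Rpower_Ropp, Rpower_1; auto.
Qed.

Lemma rpow_plus t a b : 0 < t -> rpow t (a+b) = rpow t a * rpow t b.
Proof. intro h; rewrite !rpow_pos; auto; apply Rpower_plus. Qed.

Lemma ln_le_sub1 y : 0 < y -> ln y <= y - 1.
Proof. intro h. pose proof (exp_ineq1_le (ln y)). rewrite exp_ln in H; auto; lra. Qed.

Lemma ln_div' x y : 0 < x -> 0 < y -> ln (x/y) = ln x - ln y.
Proof. intros. unfold Rdiv. rewrite ln_mult, ln_Rinv; auto; try ring; apply Rinv_0_lt_compat; auto. Qed.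

Lemma amgm u l : 0 < u -> 0 <= l <= 1 -> Rpower u l <= l * u + 1 - l.
Proof.
  intros hu hl. set (m := l*u + 1 - l).
  assert (hm : 0 < m) by (unfold m; destruct (Rle_dec l 1); nra).
  pose proof (ln_le_sub1 (u/m)) as h1. pose proof (ln_le_sub1 (1/m)) as h2.
  assert (0 < u/m) by (apply Rdiv_lt_0_compat; auto).
  assert (0 < 1/m) by (apply Rdiv_lt_0_compat; lra).
  specialize (h1 H). specialize (h2 H0).
  rewrite ln_div' in h1 by auto. rewrite ln_div' in h2 by lra. rewrite ln_1 in h2.
  assert (l * ln u <= ln m).
  { assert (l*(ln u - ln m) + (1-l)*(0 - ln m) <= l*(u/m - 1) + (1-l)*(1/m - 1)) by nra.
    assert (l*(u/m - 1) + (1-l)*(1/m - 1) = 0) by (unfold m in *; field; lra). nra. }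
  unfold Rpower. rewrite <- (exp_ln m) by auto.
  destruct (Req_dec (l * ln u) (ln m)) as [e|ne]; [rewrite e; lra|].
  left; apply exp_increasing; lra.
Qed.

Lemma bernoulli s r : 0 <= s -> 1 <= r -> 1 + r*(s-1) <= rpow s r.
Proof.
  intros [hs|hs] hr.
  - set (u := rpow s r). assert (hu : 0 < u) by (apply rpow_gt0; auto).
    assert (e: Rpower u (1/r) = s).
    { unfold u. rewrite <- rpow_pos by auto. apply rpow_inv; lra. }
    pose proof (amgm u (1/r) hu). rewrite e in H.
    assert (0 <= 1/r <= 1). { split. left; apply Rdiv_lt_0_compat; lra.
      apply (Rmult_le_reg_r r); try lra. field_simplify; lra. }
    specialize (H H0).
    assert (r*s <= u + r - 1).
    { apply (Rmult_le_reg_r (1/r)). apply Rdiv_lt_0_compat; lra.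
      replace (r*s*(1/r)) with s by (field; lra).
      replace ((u + r - 1) * (1/r)) with (1/r*u + 1 - 1/r) by (field; lra). lra. }
    lra.
  - subst. rewrite rpow_0. lra.
Qed.

Lemma tangent t m r : 0 <= t -> 0 < m -> 1 <= r ->
  rpow m r + r * rpow m r * (t - m) / m <= rpow t r.
Proof.
  intros ht hm hr. pose proof (bernoulli (t/m) r) as h.
  assert (0 <= t/m) by (apply Rmult_le_pos; auto; left; apply Rinv_0_lt_compat; auto).
  specialize (h H hr). rewrite rpow_div in h; auto.
  pose proof (rpow_gt0 m r hm).
  apply (Rmult_le_compat_r (rpow m r)) in h; [|lra].
  replace (rpow t r / rpow m r * rpow m r) with (rpow t r) in h by (field; lra).
  replace ((1 + r * (t / m - 1)) * rpow m r) with (rpow m r + r * rpow m r * (t - m) / m) in h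
    by (field; lra). auto.
Qed.

Lemma rpow_convex a b l r : 0 <= a -> 0 <= b -> 0 <= l <= 1 -> 1 <= r ->
  rpow (l*a + (1-l)*b) r <= l * rpow a r + (1-l) * rpow b r.
Proof.
  intros ha hb hl hr. set (m := l*a + (1-l)*b).
  assert (0 <= m) by (unfold m; nra).
  destruct H as [hm|hm].
  - pose proof (tangent a m r ha hm hr). pose proof (tangent b m r hb hm hr).
    assert (l * (rpow m r + r * rpow m r * (a - m) / m) + (1-l) * (rpow m r + r * rpow m r * (b - m) / m) = rpow m r)
      by (unfold m in *; field; lra).
    nra.
  - rewrite <- hm, rpow_0. pose proof (rpow_ge0 a r); pose proof (rpow_ge0 b r); nra.
Qed.

Lemma Cabs_ge0 a : 0 <= Cabs a.
Proof. apply sqrt_pos. Qed.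

Lemma Cabs_C0 : Cabs C0 = 0.
Proof. unfold Cabs, C0; simpl. replace (0*0+0*0) with 0 by ring. apply sqrt_0. Qed.

Lemma Cabs_opp a : Cabs (Copp a) = Cabs a.
Proof. unfold Cabs, Copp; simpl. f_equal; ring. Qed.

Lemma Cabs_mul a b : Cabs (Cmul a b) = Cabs a * Cabs b.
Proof.
  unfold Cabs, Cmul; simpl. rewrite <- sqrt_mult by nra. f_equal. ring.
Qed.

Lemma Cabs_tri a b : Cabs (Cadd a b) <= Cabs a + Cabs b.
Proof.
  destruct a as [x y], b as [u v]; unfold Cabs, Cadd; simpl.
  pose proof (sqrt_cauchy x y u v). unfold Rsqr in H.
  pose proof (sqrt_pos (x*x+y*y)); pose proof (sqrt_pos (u*u+v*v)).
  rewrite <- (sqrt_square (sqrt (x * x + y * y) + sqrt (u * u + v * v))) by lra.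
  apply sqrt_le_1_alt.
  replace ((sqrt (x * x + y * y) + sqrt (u * u + v * v)) * (sqrt (x * x + y * y) + sqrt (u * u + v * v)))
    with (sqrt (x * x + y * y) * sqrt (x * x + y * y) + sqrt (u * u + v * v) * sqrt (u * u + v * v)
          + 2 * (sqrt (x * x + y * y) * sqrt (u * u + v * v))) by ring.
  rewrite !sqrt_sqrt by nra. nra.
Qed.

Lemma Cabs_eq0 a : Cabs a = 0 -> a = C0.
Proof.
  destruct a as [x y]; unfold Cabs, C0; simpl; intro h.
  apply sqrt_eq_0 in h; [|nra]. assert (x = 0) by nra. assert (y = 0) by nra. subst; auto.
Qed.

Lemma Cabs_re a : Rabs (fst a) <= Cabs a.
Proof.
  destruct a as [x y]; unfold Cabs; simpl. rewrite <- sqrt_Rsqr_abs.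
  apply sqrt_le_1_alt. unfold Rsqr; nra.
Qed.

Lemma Cabs_im a : Rabs (snd a) <= Cabs a.
Proof.
  destruct a as [x y]; unfold Cabs; simpl. rewrite <- sqrt_Rsqr_abs.
  apply sqrt_le_1_alt. unfold Rsqr; nra.
Qed.

Lemma Cabs_le_reim a : Cabs a <= Rabs (fst a) + Rabs (snd a).
Proof.
  destruct a as [x y]; unfold Cabs; simpl.
  pose proof (Rabs_pos x); pose proof (Rabs_pos y).
  rewrite <- (sqrt_square (Rabs x + Rabs y)) by lra. apply sqrt_le_1_alt.
  assert (x*x = Rabs x * Rabs x) by (rewrite <- Rabs_mult; rewrite Rabs_right; nra).
  assert (y*y = Rabs y * Rabs y) by (rewrite <- Rabs_mult; rewrite Rabs_right; nra). nra.
Qed.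

Lemma Cabs_sub_re a b : Rabs (fst a - fst b) <= Cabs (Cadd a (Copp b)).
Proof. pose proof (Cabs_re (Cadd a (Copp b))). unfold Cadd, Copp in *; simpl in *. auto. Qed.
Lemma Cabs_sub_im a b : Rabs (snd a - snd b) <= Cabs (Cadd a (Copp b)).
Proof. pose proof (Cabs_im (Cadd a (Copp b))). unfold Cadd, Copp in *; simpl in *. auto. Qed.

Lemma ser_val_eq u l : infinite_sum u l -> ser_val u = l.
Proof.
  intro h. unfold ser_val. apply (uniqueness_sum u); auto.
  apply (epsilon_spec (inhabits 0) (fun l => infinite_sum u l)). exists l; auto.
Qed.

Definition isum (u : nat -> R) (l : R) := infinite_sum u l.

Lemma isum_cv u l : infinite_sum u l <-> Un_cv (sum_f_R0 u) l.
Proof. split; intro h; exact h. Qed.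

Lemma psum_le u l N : (forall n, 0 <= u n) -> infinite_sum u l -> sum_f_R0 u N <= l.
Proof. intros hu h. apply sum_incr; auto. Qed.

Lemma psum_ge0 u N : (forall n, 0 <= u n) -> 0 <= sum_f_R0 u N.
Proof. intro hu. induction N; simpl; auto. specialize (hu (S N)); lra. Qed.

Lemma isum_ge0 u l : (forall n, 0 <= u n) -> infinite_sum u l -> 0 <= l.
Proof. intros hu h. pose proof (psum_le u l 0 hu h). simpl in H. specialize (hu 0%nat). lra. Qed.

Lemma term_le_psum u j : (forall n, 0 <= u n) -> u j <= sum_f_R0 u j.
Proof. intros hu. destruct j; simpl; [lra|]. pose proof (psum_ge0 u j hu); lra. Qed.

Lemma term_le u l j : (forall n, 0 <= u n) -> infinite_sum u l -> u j <= l.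
Proof. intros hu h. eapply Rle_trans; [apply term_le_psum; auto|apply psum_le; auto]. Qed.

Lemma bounded_summable u B : (forall n, 0 <= u n) -> (forall N, sum_f_R0 u N <= B) ->
  exists l, infinite_sum u l /\ l <= B.
Proof.
  intros hu hB. assert (g : Un_growing (sum_f_R0 u)).
  { intro n; simpl; specialize (hu (S n)); lra. }
  destruct (growing_cv _ g) as [l hl]. { exists B; intros x [n e]; subst; auto. }
  exists l; split; auto. apply (Rle_cv_lim (Un := sum_f_R0 u) (Vn := fun _ => B)); auto.
  intros e he; exists 0%nat; intros; unfold Rdist; rewrite Rminus_diag, Rabs_R0; auto.
Qed.

Lemma compare_sum u v L : (forall n, 0 <= u n <= v n) -> infinite_sum v L ->
  exists l, infinite_sum u l /\ l <= L.
Proof.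
  intros h hv. apply bounded_summable. intro n; apply h.
  intro N. eapply Rle_trans; [|apply (psum_le v L N); auto].
  apply sum_Rle; intros; apply h. intro n; specialize (h n); lra.
Qed.

Lemma isum_plus u v a b : infinite_sum u a -> infinite_sum v b -> infinite_sum (fun n => u n + v n) (a+b).
Proof.
  intros hu hv. unfold infinite_sum. intros e he.
  destruct (CV_plus _ _ _ _ hu hv e he) as [N hN]. exists N; intros n hn.
  rewrite sum_plus. apply hN; auto.
Qed.

Lemma sum_scal (u : nat -> R) c N : sum_f_R0 (fun n => c * u n) N = c * sum_f_R0 u N.
Proof. induction N; simpl; auto. rewrite IHN; ring. Qed.

Lemma isum_scal u a c : infinite_sum u a -> infinite_sum (fun n => c * u n) (c*a).
Proof.
  intros hu. intros e he. assert (hc : Un_cv (fun _ : nat => c) c).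
  { intros e' he'; exists 0%nat; intros; unfold Rdist; rewrite Rminus_diag, Rabs_R0; auto. }
  destruct (CV_mult _ _ _ _ hc hu e he) as [N hN]. exists N; intros n hn.
  rewrite sum_scal. apply hN; auto.
Qed.

Lemma isum_ext u v l : (forall n, u n = v n) -> infinite_sum u l -> infinite_sum v l.
Proof. intros e h. replace v with u; auto. apply functional_extensionality; auto. Qed.

Lemma isum_zero_eq u l : (forall n, 0 <= u n) -> infinite_sum u l -> l = 0 -> forall n, u n = 0.
Proof. intros hu h e n. pose proof (term_le u l n hu h). specialize (hu n). lra. Qed.

Lemma isum_finite u N : (forall n, (n > N)%nat -> u n = 0) -> infinite_sum u (sum_f_R0 u N).
Proof.
  intros h e he. exists N. intros n hn. unfold Rdist.
  replace (sum_f_R0 u n) with (sum_f_R0 u N). rewrite Rminus_diag, Rabs_R0; auto.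
  induction hn; auto. simpl. rewrite <- IHhn, h; [ring|lia].
Qed.

Lemma mink r a b c SA SB : 1 <= r -> (forall n, 0 <= a n) -> (forall n, 0 <= b n) ->
  (forall n, 0 <= c n <= a n + b n) ->
  infinite_sum (fun n => rpow (a n) r) SA -> infinite_sum (fun n => rpow (b n) r) SB ->
  exists SC, infinite_sum (fun n => rpow (c n) r) SC /\
    rpow SC (1/r) <= rpow SA (1/r) + rpow SB (1/r).
Proof.
  intros hr ha hb hc hA hB.
  assert (hr0 : 0 < 1/r) by (apply Rdiv_lt_0_compat; lra).
  assert (SA0 : 0 <= SA) by (eapply isum_ge0; [intro; apply rpow_ge0|eauto]).
  assert (SB0 : 0 <= SB) by (eapply isum_ge0; [intro; apply rpow_ge0|eauto]).
  set (A := rpow SA (1/r)). set (B := rpow SB (1/r)).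
  assert (eA : rpow A r = SA) by (unfold A; rewrite rpow_comp; auto; replace (1/r*r) with 1 by (field; lra); apply rpow_1; auto).
  assert (eB : rpow B r = SB) by (unfold B; rewrite rpow_comp; auto; replace (1/r*r) with 1 by (field; lra); apply rpow_1; auto).
  assert (A0 : 0 <= A) by apply rpow_ge0. assert (B0 : 0 <= B) by apply rpow_ge0.
  destruct A0 as [A0|A0].
  destruct B0 as [B0|B0].
  -
    set (l := A/(A+B)).
    assert (hl : 0 <= l <= 1) by (unfold l; split; [apply Rmult_le_pos; [lra|left; apply Rinv_0_lt_compat; lra]|
       apply (Rmult_le_reg_r (A+B)); [lra|]; field_simplify; lra]).
    set (v := fun n => rpow (A+B) r * (l * (rpow (a n) r / SA) + (1-l) * (rpow (b n) r / SB))).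
    assert (SApos : 0 < SA) by (rewrite <- eA; apply rpow_gt0; auto).
    assert (SBpos : 0 < SB) by (rewrite <- eB; apply rpow_gt0; auto).
    assert (h1 : infinite_sum (fun n => rpow (a n) r / SA) 1).
    { pose proof (isum_scal _ _ (/SA) hA) as h. replace (/SA * SA) with 1 in h by (field; lra).
      eapply isum_ext; [|exact h]; intro; simpl; unfold Rdiv; ring. }
    assert (h2 : infinite_sum (fun n => rpow (b n) r / SB) 1).
    { pose proof (isum_scal _ _ (/SB) hB) as h. replace (/SB * SB) with 1 in h by (field; lra).
      eapply isum_ext; [|exact h]; intro; simpl; unfold Rdiv; ring. }
    pose proof (isum_scal _ _ l h1) as h1'. pose proof (isum_scal _ _ (1-l) h2) as h2'.
    pose proof (isum_scal _ _ (rpow (A+B) r) (isum_plus _ _ _ _ h1' h2')) as hv.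
    replace (rpow (A + B) r * (l * 1 + (1 - l) * 1)) with (rpow (A+B) r) in hv by ring.
    fold v in hv.
    destruct (compare_sum (fun n => rpow (c n) r) v (rpow (A+B) r)) as [SC [hSC hle]]; auto.
    + intro n. split; [apply rpow_ge0|].
      assert (ec : a n + b n = (A+B) * (l * (a n / A) + (1-l) * (b n / B))) by (unfold l; field; lra).
      eapply Rle_trans. apply rpow_le; [split; [apply hc|]; apply hc|lra].
      rewrite ec, rpow_mul; [|lra|].
      2:{ pose proof (ha n); pose proof (hb n).
          assert (0 <= a n / A) by (apply Rmult_le_pos; [lra|left; apply Rinv_0_lt_compat; lra]).
          assert (0 <= b n / B) by (apply Rmult_le_pos; [lra|left; apply Rinv_0_lt_compat; lra]). nra. }
      unfold v. apply Rmult_le_compat_l; [apply rpow_ge0|].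
      rewrite <- eA, <- eB, <- !rpow_div by auto.
      apply rpow_convex; auto; apply Rmult_le_pos; try apply ha; try apply hb; left; apply Rinv_0_lt_compat; lra.
    + exists SC; split; auto.
      replace (A + B) with (rpow (rpow (A+B) r) (1/r)) by (apply rpow_inv; lra).
      apply rpow_le; [split|]; try lra. eapply isum_ge0; [|eauto]; intro; apply rpow_ge0.
  -
    assert (SB = 0) by (rewrite <- eB, <- B0, rpow_0; auto).
    assert (hb0 : forall n, b n = 0).
    { intro n. apply (rpow_eq0 _ r); auto. apply (isum_zero_eq (fun n => rpow (b n) r) SB); auto. intro; apply rpow_ge0. }
    destruct (compare_sum (fun n => rpow (c n) r) (fun n => rpow (a n) r) SA) as [SC [h1 h2]]; auto.
    { intro n; split; [apply rpow_ge0|]. apply rpow_le; [|lra]. specialize (hc n); rewrite hb0 in hc; lra. }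
    exists SC; split; auto. fold A. rewrite <- B0. rewrite Rplus_0_r.
    apply rpow_le; [split|]; auto. eapply isum_ge0; [|eauto]; intro; apply rpow_ge0. lra.
  - assert (SA = 0) by (rewrite <- eA, <- A0, rpow_0; auto).
    assert (ha0 : forall n, a n = 0).
    { intro n. apply (rpow_eq0 _ r); auto. apply (isum_zero_eq (fun n => rpow (a n) r) SA); auto. intro; apply rpow_ge0. }
    destruct (compare_sum (fun n => rpow (c n) r) (fun n => rpow (b n) r) SB) as [SC [h1 h2]]; auto.
    { intro n; split; [apply rpow_ge0|]. apply rpow_le; [|lra]. specialize (hc n); rewrite ha0 in hc; lra. }
    exists SC; split; auto. fold B. rewrite <- A0. rewrite Rplus_0_l.
    apply rpow_le; [split|]; auto. eapply isum_ge0; [|eauto]; intro; apply rpow_ge0. lra.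
Qed.

Definition ps (r : R) (x : nat -> C) : nat -> R := fun n => rpow (Cabs (x n)) r.
Definition memb (r : R) (x : nat -> C) : Prop := exists l, infinite_sum (ps r x) l.
Definition nrm (r : R) (x : nat -> C) : R := rpow (ser_val (ps r x)) (1/r).
Definition vplus (x y : nat -> C) : nat -> C := fun n => Cadd (x n) (y n).
Definition vsc (c : C) (x : nat -> C) : nat -> C := fun n => Cmul c (x n).
Definition vneg (x : nat -> C) : nat -> C := fun n => Copp (x n).
Definition vminus (x y : nat -> C) := vplus x (vneg y).
Definition z0 : nat -> C := fun _ => C0.

Lemma mem_lp r x : @mem (lp r) x = memb r x.
Proof. reflexivity. Qed.
Lemma vnorm_lp r x : @vnorm (lp r) x = nrm r x.
Proof. reflexivity. Qed.

Lemma ps_ge0 r x n : 0 <= ps r x n.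
Proof. apply rpow_ge0. Qed.

Lemma nrm_ge0 r x : 0 <= nrm r x.
Proof. apply rpow_ge0. Qed.

Lemma nrm_eq r x S : infinite_sum (ps r x) S -> nrm r x = rpow S (1/r).
Proof. intro h; unfold nrm; rewrite (ser_val_eq _ S h); auto. Qed.

Lemma nrm_pow r x S : 1 <= r -> infinite_sum (ps r x) S -> rpow (nrm r x) r = S.
Proof.
  intros hr h. rewrite (nrm_eq r x S h). rewrite rpow_comp.
  replace (1/r*r) with 1 by (field; lra). apply rpow_1.
  eapply isum_ge0; [|eauto]; apply ps_ge0. eapply isum_ge0; [|eauto]; apply ps_ge0.
Qed.

Lemma lp_add r x y : 1 <= r -> memb r x -> memb r y ->
  memb r (vplus x y) /\ nrm r (vplus x y) <= nrm r x + nrm r y.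
Proof.
  intros hr [SA hA] [SB hB].
  destruct (mink r (fun n => Cabs (x n)) (fun n => Cabs (y n)) (fun n => Cabs (vplus x y n)) SA SB)
    as [SC [h1 h2]]; auto; try (intro; apply Cabs_ge0).
  intro n; split; [apply Cabs_ge0|apply Cabs_tri].
  split; [exists SC; auto|]. rewrite (nrm_eq _ _ _ h1), (nrm_eq _ _ _ hA), (nrm_eq _ _ _ hB); auto.
Qed.

Lemma lp_scal r c x : 1 <= r -> memb r x -> memb r (vsc c x) /\ nrm r (vsc c x) = Cabs c * nrm r x.
Proof.
  intros hr [S hS].
  assert (h : infinite_sum (ps r (vsc c x)) (rpow (Cabs c) r * S)).
  { eapply isum_ext; [|apply isum_scal; exact hS]. intro n; unfold ps, vsc.
    rewrite Cabs_mul, rpow_mul; auto; apply Cabs_ge0. }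
  split; [eexists; eauto|]. rewrite (nrm_eq _ _ _ h), (nrm_eq _ _ _ hS).
  rewrite rpow_mul; [|apply rpow_ge0|eapply isum_ge0; [|eauto]; apply ps_ge0].
  rewrite rpow_inv; auto. apply Cabs_ge0. lra.
Qed.

Lemma Copp_Cmul a : Copp a = Cmul (-1, 0) a.
Proof. destruct a; unfold Copp, Cmul; simpl; f_equal; ring. Qed.

Lemma vneg_vsc x : vneg x = vsc (-1,0) x.
Proof. apply functional_extensionality; intro; unfold vneg, vsc; apply Copp_Cmul. Qed.

Lemma Cabs_m1 : Cabs (-1, 0) = 1.
Proof. unfold Cabs; simpl. replace (-1 * -1 + 0 * 0) with 1 by ring. apply sqrt_1. Qed.

Lemma lp_neg r x : 1 <= r -> memb r x -> memb r (vneg x) /\ nrm r (vneg x) = nrm r x.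
Proof. intros hr h. rewrite vneg_vsc. destruct (lp_scal r (-1,0) x hr h); split; auto. rewrite H0, Cabs_m1; ring. Qed.

Lemma lp_minus r x y : 1 <= r -> memb r x -> memb r y ->
  memb r (vminus x y) /\ nrm r (vminus x y) <= nrm r x + nrm r y.
Proof.
  intros hr hx hy. destruct (lp_neg r y hr hy). destruct (lp_add r x (vneg y) hr hx H). rewrite H0 in H2; auto.
Qed.

Lemma coord_le r x j : 1 <= r -> memb r x -> Cabs (x j) <= nrm r x.
Proof.
  intros hr [S hS]. rewrite (nrm_eq _ _ _ hS).
  pose proof (term_le _ _ j (ps_ge0 r x) hS). unfold ps in H.
  rewrite <- (rpow_inv (Cabs (x j)) r); [|apply Cabs_ge0|lra].
  apply rpow_le; [split; auto; apply rpow_ge0|]. left; apply Rdiv_lt_0_compat; lra.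
Qed.

Lemma isum_zero : infinite_sum (fun _ => 0) 0.
Proof.
  intros e he; exists 0%nat; intros n hn. unfold Rdist.
  replace (sum_f_R0 (fun _ => 0) n) with 0. rewrite Rminus_diag, Rabs_R0; auto.
  induction n; simpl; auto. rewrite <- IHn; [ring|lia].
Qed.

Lemma z0_memb r : memb r z0 /\ nrm r z0 = 0.
Proof.
  assert (h : infinite_sum (ps r z0) 0).
  { eapply isum_ext; [|exact isum_zero]. intro; unfold ps, z0; rewrite Cabs_C0, rpow_0; auto. }
  split; [eexists; eauto|]. rewrite (nrm_eq _ _ _ h), rpow_0; auto.
Qed.

Lemma Cadd_0_r a : Cadd a C0 = a.
Proof. destruct a; unfold Cadd, C0; simpl; f_equal; ring. Qed.
Lemma Cadd_0_l a : Cadd C0 a = a.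
Proof. destruct a; unfold Cadd, C0; simpl; f_equal; ring. Qed.
Lemma Cadd_comm a b : Cadd a b = Cadd b a.
Proof. destruct a, b; unfold Cadd; simpl; f_equal; ring. Qed.
Lemma Cadd_assoc a b c : Cadd a (Cadd b c) = Cadd (Cadd a b) c.
Proof. destruct a, b, c; unfold Cadd; simpl; f_equal; ring. Qed.
Lemma Cadd_opp_r a : Cadd a (Copp a) = C0.
Proof. destruct a; unfold Cadd, Copp, C0; simpl; f_equal; ring. Qed.
Lemma Cadd_sub_cancel a b : Cadd (Cadd a (Copp b)) b = a.
Proof. destruct a, b; unfold Cadd, Copp; simpl; f_equal; ring. Qed.

Lemma lp_rev_tri r x y : 1 <= r -> memb r x -> memb r y -> nrm r x <= nrm r (vminus x y) + nrm r y.
Proof.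
  intros hr hx hy. destruct (lp_minus r x y hr hx hy) as [h1 _].
  destruct (lp_add r (vminus x y) y hr h1 hy) as [_ h2].
  replace (vplus (vminus x y) y) with x in h2; auto.
  apply functional_extensionality; intro n; unfold vplus, vminus, vneg, vplus.
  rewrite Cadd_sub_cancel; auto.
Qed.

Lemma ps_disj r x y n : 0 < r -> (x n = C0 \/ y n = C0) -> ps r (vplus x y) n = ps r x n + ps r y n.
Proof.
  intros hr [h|h]; unfold ps, vplus; rewrite h; [rewrite Cadd_0_l|rewrite Cadd_0_r]; rewrite Cabs_C0, rpow_0; ring.
Qed.

Lemma isum_disj r x y S1 S2 : 0 < r -> (forall n, x n = C0 \/ y n = C0) ->
  infinite_sum (ps r x) S1 -> infinite_sum (ps r y) S2 -> infinite_sum (ps r (vplus x y)) (S1 + S2).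
Proof.
  intros hr hd h1 h2. eapply isum_ext; [|apply (isum_plus _ _ _ _ h1 h2)].
  intro n; simpl; symmetry; apply ps_disj; auto.
Qed.

Lemma memb_le r x y : 0 < r -> (forall n, Cabs (x n) <= Cabs (y n)) -> memb r y ->
  memb r x /\ nrm r x <= nrm r y.
Proof.
  intros hr hle [S hS]. destruct (compare_sum (ps r x) (ps r y) S) as [S' [h1 h2]]; auto.
  intro n; split; [apply ps_ge0|]. apply rpow_le; [split; [apply Cabs_ge0|apply hle]|lra].
  split; [eexists; eauto|]. rewrite (nrm_eq _ _ _ h1), (nrm_eq _ _ _ hS).
  apply rpow_le. split; auto. eapply isum_ge0; [|eauto]; apply ps_ge0.
  left; apply Rdiv_lt_0_compat; lra.
Qed.

Lemma Rabs_le_inv a b : Rabs a <= b -> - b <= a <= b.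
Proof. unfold Rabs; destruct (Rcase_abs a); lra. Qed.

Definition unb (P : nat -> Prop) := forall N, exists n, (N <= n)%nat /\ P n.

Lemma ph_nat K (c : nat -> nat) (P : nat -> Prop) : unb P -> (forall n, P n -> (c n < K)%nat) ->
  exists k, unb (fun n => P n /\ c n = k).
Proof.
  revert P. induction K; intros P hP hc.
  - destruct (hP 0%nat) as [n [_ hn]]. specialize (hc n hn). lia.
  - destruct (classic (unb (fun n => P n /\ c n = K))) as [h|h]; [exists K; auto|].
    assert (exists N0, forall n, (N0 <= n)%nat -> ~ (P n /\ c n = K)) as [N0 hN0].
    { apply NNPP; intro H. apply h. intro N. apply NNPP; intro H'. apply H. exists N.
      intros n hn hh. apply H'. exists n; auto. }
    destruct (IHK (fun n => P n /\ (N0 <= n)%nat)) as [k hk].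
    + intro N. destruct (hP (max N N0)) as [n [hn1 hn2]]. exists n; split; [lia|split; auto; lia].
    + intros n [hn1 hn2]. specialize (hc n hn1). assert (c n <> K) by (intro e; apply (hN0 n hn2); auto). lia.
    + exists k. intro N. destruct (hk N) as [n [hn [[h1 h2] h3]]]. exists n; auto.
Qed.

Lemma up_mono x y : x <= y -> (up x <= up y)%Z.
Proof.
  intro h. destruct (archimed x) as [a1 a2]. destruct (archimed y) as [b1 b2].
  assert (IZR (up x) < IZR (up y) + 1) by lra.
  rewrite <- plus_IZR in H. apply lt_IZR in H. lia.
Qed.

Lemma ph_real (s : nat -> R) B eta (P : nat -> Prop) : 0 < eta -> unb P ->
  (forall n, P n -> Rabs (s n) <= B) ->
  exists P', (forall n, P' n -> P n) /\ unb P' /\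
    forall n n', P' n -> P' n' -> Rabs (s n - s n') < eta.
Proof.
  intros he hP hb.
  set (c := fun n => Z.to_nat (up ((s n + B)/eta))).
  set (K := S (Z.to_nat (up ((2*B)/eta)))).
  destruct (ph_nat K c P hP) as [k hk].
  - intros n hn. unfold c, K. specialize (hb n hn). apply Rabs_le_inv in hb.
    assert ((s n + B)/eta <= (2*B)/eta) by (apply Rmult_le_compat_r; [left; apply Rinv_0_lt_compat; auto|lra]).
    apply up_mono in H. lia.
  - exists (fun n => P n /\ c n = k). split; [intros n [h _]; auto|split; auto].
    intros n n' [h1 e1] [h2 e2]. unfold c in e1, e2.
    pose proof (hb n h1) as b1. pose proof (hb n' h2) as b2. apply Rabs_le_inv in b1. apply Rabs_le_inv in b2.
    assert (0 <= (s n + B)/eta) by (apply Rmult_le_pos; [lra|left; apply Rinv_0_lt_compat; auto]).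
    assert (0 <= (s n' + B)/eta) by (apply Rmult_le_pos; [lra|left; apply Rinv_0_lt_compat; auto]).
    destruct (archimed ((s n + B)/eta)) as [a1 a2]. destruct (archimed ((s n' + B)/eta)) as [c1 c2].
    assert (p1 : (0 < up ((s n + B)/eta))%Z) by (apply lt_IZR; lra).
    assert (p2 : (0 < up ((s n' + B)/eta))%Z) by (apply lt_IZR; lra).
    assert (up ((s n + B)/eta) = up ((s n' + B)/eta)) by lia.
    rewrite H1 in a1, a2.
    assert (Rabs ((s n + B)/eta - (s n' + B)/eta) < 1) by (apply Rabs_def1; lra).
    replace ((s n + B)/eta - (s n' + B)/eta) with ((s n - s n')/eta) in H2 by (field; lra).
    unfold Rdiv in H2. rewrite Rabs_mult, Rabs_inv, (Rabs_right eta) in H2 by lra.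
    apply (Rmult_lt_compat_r eta) in H2; auto. rewrite Rmult_assoc, Rinv_l, Rmult_1_r in H2; lra.
Qed.

Lemma ph_multi (s : nat -> nat -> R) B eta d (P : nat -> Prop) : 0 < eta -> unb P ->
  (forall k n, P n -> Rabs (s k n) <= B) ->
  exists P', (forall n, P' n -> P n) /\ unb P' /\
    forall n n' k, (k < d)%nat -> P' n -> P' n' -> Rabs (s k n - s k n') < eta.
Proof.
  intros he hP hb. induction d.
  - exists P; repeat split; auto. intros; lia.
  - destruct IHd as [P1 [h1 [h2 h3]]].
    destruct (ph_real (s d) B eta P1 he h2) as [P2 [g1 [g2 g3]]]; auto.
    exists P2; repeat split; auto. intros n n' k hk hn hn'.
    destruct (Nat.eq_dec k d); [subst; auto|]. apply h3; auto; lia.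
Qed.

Lemma unb_two (P : nat -> Prop) N : unb P -> exists a b, (N <= a)%nat /\ (a < b)%nat /\ P a /\ P b.
Proof.
  intro h. destruct (h N) as [a [ha pa]]. destruct (h (S a)) as [b [hb pb]].
  exists a, b; repeat split; auto; lia.
Qed.

Definition ev (n : nat) : nat -> C := fun k => if Nat.eqb k n then C1 else C0.

Lemma Cabs_C1 : Cabs C1 = 1.
Proof. unfold Cabs, C1; simpl. replace (1*1+0*0) with 1 by ring. apply sqrt_1. Qed.

Lemma ps_ev r n k : 0 < r -> ps r (ev n) k = if Nat.eqb k n then 1 else 0.
Proof. intro hr; unfold ps, ev. destruct (Nat.eqb k n); [rewrite Cabs_C1, rpow_one|rewrite Cabs_C0, rpow_0]; auto. Qed.

Lemma sum_ind_one n N : (n <= N)%nat -> sum_f_R0 (fun k => if Nat.eqb k n then 1 else 0) N = 1.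
Proof.
  intro h. induction N.
  - assert (n = 0%nat) by lia; subst; simpl; auto.
  - destruct (Nat.eq_dec n (S N)).
    + subst. simpl. rewrite Nat.eqb_refl.
      replace (sum_f_R0 (fun k : nat => if Nat.eqb k (S N) then 1 else 0) N) with 0. ring.
      clear. assert (forall M, (M <= N)%nat -> 0 = sum_f_R0 (fun k : nat => if Nat.eqb k (S N) then 1 else 0) M).
      { induction M; intros. simpl. destruct (Nat.eqb 0 (S N)) eqn:E; [apply Nat.eqb_eq in E; lia|auto].
        rewrite tech5; cbv beta. rewrite <- IHM by lia. destruct (Nat.eqb (S M) (S N)) eqn:E; [apply Nat.eqb_eq in E; lia|ring]. }
      apply H; lia.
    + rewrite tech5; cbv beta. rewrite IHN by lia. destruct (Nat.eqb (S N) n) eqn:E; [apply Nat.eqb_eq in E; lia|ring].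
Qed.

Lemma isum_ev r n : 0 < r -> infinite_sum (ps r (ev n)) 1.
Proof.
  intro hr. eapply isum_ext. intro k; symmetry; apply ps_ev; auto.
  assert (h := isum_finite (fun k => if Nat.eqb k n then 1 else 0) n).
  rewrite sum_ind_one in h by lia. apply h.
  intros k hk. destruct (Nat.eqb k n) eqn:E; auto. apply Nat.eqb_eq in E; lia.
Qed.

Lemma ev_memb r n : 1 <= r -> memb r (ev n) /\ nrm r (ev n) = 1.
Proof.
  intro hr. split; [exists 1; apply isum_ev; lra|]. rewrite (nrm_eq _ _ 1); [apply rpow_one|apply isum_ev; lra].
Qed.

Lemma isum_evdiff r a b : 1 <= r -> a <> b -> infinite_sum (ps r (vminus (ev a) (ev b))) 2.
Proof.
  intros hr hab. replace 2 with (1+1) by ring. unfold vminus. apply isum_disj; [lra| |apply isum_ev; lra|].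
  - intro n. unfold ev, vneg. destruct (Nat.eqb n a) eqn:E1; [|left; auto]. right.
    destruct (Nat.eqb n b) eqn:E2; [apply Nat.eqb_eq in E1; apply Nat.eqb_eq in E2; exfalso; apply hab; congruence|].
    unfold Copp, C0; simpl; f_equal; ring.
  - eapply isum_ext; [|apply (isum_ev r b); lra]. intro k; unfold ps, vneg; rewrite Cabs_opp; auto.
Qed.

Definition head (m : nat) (u : nat -> R) : nat -> R := fun j => if Nat.ltb j m then u j else 0.
Definition tail (m : nat) (u : nat -> R) : nat -> R := fun j => if Nat.leb m j then u j else 0.



Lemma head_tail m u j : head m u j + tail m u j = u j.
Proof.
  unfold head, tail. destruct (Nat.ltb_spec j m); destruct (Nat.leb_spec m j); try (exfalso; lia); ring.
Qed.

Lemma sum_head_eq k u N : (k <= N)%nat -> sum_f_R0 (head (S k) u) N = sum_f_R0 u k.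
Proof.
  intro h. induction N.
  - assert (k = 0%nat) by lia; subst. simpl. unfold head; simpl; auto.
  - destruct (Nat.eq_dec k (S N)).
    + subst. clear IHN h. assert (forall M, (M <= S N)%nat -> sum_f_R0 (head (S (S N)) u) M = sum_f_R0 u M).
      { induction M; intros. simpl; unfold head; simpl; auto.
        rewrite !tech5, IHM by lia. unfold head. destruct (Nat.ltb (S M) (S (S N))) eqn:E; auto.
        apply Nat.ltb_ge in E; exfalso; lia. }
      apply H; lia.
    + rewrite tech5, IHN by lia. unfold head. destruct (Nat.ltb (S N) (S k)) eqn:E; [apply Nat.ltb_lt in E; exfalso; lia|ring].
Qed.

Lemma sum_tail_zero k u N : (N <= k)%nat -> sum_f_R0 (tail (S k) u) N = 0.
Proof.
  intro h. induction N.
  - simpl; unfold tail. destruct (Nat.leb (S k) 0) eqn:E; auto. apply Nat.leb_le in E; exfalso; lia.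
  - rewrite tech5, IHN by lia. unfold tail. destruct (Nat.leb (S k) (S N)) eqn:E; [apply Nat.leb_le in E; exfalso; lia|ring].
Qed.

Lemma sum_head_tail m u N : sum_f_R0 (head m u) N + sum_f_R0 (tail m u) N = sum_f_R0 u N.
Proof. rewrite <- sum_plus. apply sum_eq; intros; apply head_tail. Qed.

Lemma tail_small u Sm tau : (forall n, 0 <= u n) -> infinite_sum u Sm -> 0 < tau ->
  exists m0, forall m, (m0 <= m)%nat -> exists l, infinite_sum (tail m u) l /\ l <= tau.
Proof.
  intros hu hS ht. destruct (hS tau ht) as [N0 hN0]. exists (S N0). intros m hm.
  destruct m as [|k]; [lia|]. apply bounded_summable.
  { intro n; unfold tail; destruct (Nat.leb (S k) n); auto; lra. }
  intro N. destruct (le_lt_dec N k).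
  - rewrite sum_tail_zero by auto. lra.
  - pose proof (sum_head_tail (S k) u N). rewrite sum_head_eq in H by lia.
    pose proof (psum_le u Sm N hu hS). specialize (hN0 k ltac:(lia)). unfold Rdist in hN0.
    apply Rabs_def2 in hN0. lra.
Qed.

Lemma head_small u m c : (forall n, 0 <= u n) -> 0 <= c -> (forall j, (j < m)%nat -> u j <= c) ->
  exists l, infinite_sum (head m u) l /\ l <= INR m * c.
Proof.
  intros hu hc hb. apply bounded_summable.
  { intro n; unfold head; destruct (Nat.ltb n m); auto; lra. }
  assert (forall N, sum_f_R0 (head m u) N <= INR (Nat.min (S N) m) * c).
  { induction N.
    - change (sum_f_R0 (head m u) 0) with (head m u 0). unfold head. destruct (Nat.ltb 0 m) eqn:E.
      + apply Nat.ltb_lt in E. replace (Nat.min 1 m) with 1%nat by lia. change (INR 1) with 1. specialize (hb 0%nat E). lra.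
      + apply Nat.ltb_ge in E. replace (Nat.min 1 m) with 0%nat by lia. simpl; lra.
    - rewrite tech5. unfold head at 2. destruct (Nat.ltb (S N) m) eqn:E.
      + apply Nat.ltb_lt in E. replace (Nat.min (S (S N)) m) with (S (Nat.min (S N) m)) by lia.
        rewrite S_INR. specialize (hb (S N) E). lra.
      + apply Nat.ltb_ge in E. replace (Nat.min (S (S N)) m) with (Nat.min (S N) m) by lia. lra. }
  intro N. eapply Rle_trans; [apply H|]. apply Rmult_le_compat_r; auto. apply le_INR; lia.
Qed.

Lemma growth al be A0 B0 : 0 < be < al -> exists N : nat, A0 * rpow (INR N) be + B0 < rpow (INR N) al.
Proof.
  intros [hb ha]. set (A' := Rabs A0 + Rabs B0 + 1).
  set (X0 := Rmax 1 (rpow (A'+1) (1/(al-be)))).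
  assert (hX0 : 1 <= X0) by apply Rmax_l.
  destruct (archimed X0) as [u1 u2].
  assert (hup : (0 <= up X0)%Z) by (apply le_IZR; lra).
  exists (Z.to_nat (up X0)).
  rewrite INR_IZR_INZ, Z2Nat.id by auto. set (X := IZR (up X0)).
  assert (hX : 1 <= X) by (unfold X; lra).
  assert (e1 : rpow X al = rpow X (al - be) * rpow X be).
  { rewrite <- rpow_plus by lra. f_equal; ring. }
  assert (e2 : 1 <= rpow X be) by (rewrite <- (rpow_one be); apply rpow_le; lra).
  assert (e3 : A' + 1 <= rpow X (al - be)).
  { replace (A'+1) with (rpow (rpow (A'+1) (1/(al-be))) (al-be)).
    apply rpow_le; [|lra]. split; [apply rpow_ge0|]. pose proof (Rmax_r 1 (rpow (A' + 1) (1 / (al - be)))). fold X0 in H. unfold X; lra.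
    rewrite rpow_comp. replace (1/(al-be)*(al-be)) with 1 by (field; lra). apply rpow_1.
    unfold A'; pose proof (Rabs_pos A0); pose proof (Rabs_pos B0); lra.
    unfold A'; pose proof (Rabs_pos A0); pose proof (Rabs_pos B0); lra. }
  rewrite e1. unfold A' in e3.
  pose proof (Rle_abs A0); pose proof (Rle_abs B0); pose proof (Rabs_pos A0); pose proof (Rabs_pos B0).
  assert (A0 * rpow X be <= Rabs A0 * rpow X be) by (apply Rmult_le_compat_r; lra).
  assert (B0 <= Rabs B0 * rpow X be) by nra.
  nra.
Qed.

Lemma vminus_shift (u v y : nat -> C) : vminus u v = vminus (vminus u y) (vminus v y).
Proof. apply functional_extensionality; intro n; unfold vminus, vplus, vneg, Cadd, Copp; simpl; f_equal; ring. Qed.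

Lemma pow_le1' x n : 0 <= x <= 1 -> x ^ n <= 1.
Proof. intro h; induction n; simpl; [lra|]. assert (0 <= x ^ n) by (apply pow_le; lra). nra. Qed.

Section Core.
Variables (p q : R) (hp : 1 <= p) (hq : 1 <= q) (hpq : p <> q).
Variables (T J : (nat -> C) -> (nat -> C)).
Hypothesis hTm : forall x, memb p x -> memb p (T x).
Hypothesis hTadd : forall x y, memb p x -> memb p y -> T (vplus x y) = vplus (T x) (T y).
Hypothesis hTsc : forall c x, memb p x -> T (vsc c x) = vsc c (T x).
Hypothesis hTc : forall x : nat -> (nat -> C), (forall n, memb p (x n) /\ nrm p (x n) <= 1) ->
  exists (phi : nat -> nat) y, (forall n, (phi n < phi (S n))%nat) /\ memb p y /\
    Un_cv (fun n => nrm p (vminus (T (x (phi n))) y)) 0.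
Hypothesis hJm : forall x, memb p x -> memb q (J x).
Hypothesis hJadd : forall x y, memb p x -> memb p y -> J (vplus x y) = vplus (J x) (J y).
Hypothesis hJsc : forall c x, memb p x -> J (vsc c x) = vsc c (J x).
Variables (C1 M K : R).
Hypothesis hJb : forall x, memb p x -> nrm q (J x) <= C1 * nrm p x.
Hypothesis hM : 0 < M.
Hypothesis hK : 0 <= K.
Hypothesis hlow : forall x, memb p x -> nrm p x <= M * nrm q (J x) + K * nrm p (T x).

Lemma T_minus x y : memb p x -> memb p y -> T (vminus x y) = vminus (T x) (T y).
Proof.
  intros hx hy. unfold vminus. rewrite hTadd; auto; [|apply lp_neg; auto].
  rewrite !vneg_vsc, hTsc; auto.
Qed.

Lemma J_minus x y : memb p x -> memb p y -> J (vminus x y) = vminus (J x) (J y).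
Proof.
  intros hx hy. unfold vminus. rewrite hJadd; auto; [|apply lp_neg; auto].
  rewrite !vneg_vsc, hJsc; auto.
Qed.

Lemma J_z0 : J z0 = z0.
Proof.
  assert (e : z0 = vsc C0 z0) by (apply functional_extensionality; intro; unfold z0, vsc, Cmul, C0; simpl; f_equal; ring).
  rewrite e, hJsc by apply z0_memb. apply functional_extensionality; intro; unfold z0, vsc, Cmul, C0; simpl; f_equal; ring.
Qed.

Definition delta := / (2 * (K + 1)).
Definition dl (i : nat) := delta * (/2) ^ i.
Definition rho := Rmin 1 (/ (4 * M)).
Definition eps (i : nat) := rho * (/2) ^ (S i).
Definition tau (i : nat) := rpow (eps i) q / 2.

Lemma delta_pos : 0 < delta.
Proof. unfold delta; apply Rinv_0_lt_compat; lra. Qed.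
Lemma dl_pos i : 0 < dl i.
Proof. unfold dl; apply Rmult_lt_0_compat; [apply delta_pos|apply pow_lt; lra]. Qed.
Lemma rho_pos : 0 < rho.
Proof. unfold rho, Rmin; destruct (Rle_dec 1 (/ (4*M))); [lra|apply Rinv_0_lt_compat; lra]. Qed.
Lemma eps_pos i : 0 < eps i.
Proof. unfold eps; apply Rmult_lt_0_compat; [apply rho_pos|apply pow_lt; lra]. Qed.
Lemma tau_pos i : 0 < tau i.
Proof. unfold tau; apply Rdiv_lt_0_compat; [apply rpow_gt0, eps_pos|lra]. Qed.

Lemma compact_data : exists (phi : nat -> nat) y, (forall n, (phi n < phi (S n))%nat) /\ memb p y /\
    Un_cv (fun n => nrm p (vminus (T (ev (phi n))) y)) 0.
Proof.
  destruct (hTc (fun n => ev n)) as [phi [y [h1 [h2 h3]]]].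
  intro n; destruct (ev_memb p n hp); split; auto; lra.
  exists phi, y; auto.
Qed.

Variables (phi : nat -> nat) (y : nat -> C).
Hypothesis hphi : forall n, (phi n < phi (S n))%nat.
Hypothesis hy : memb p y.
Hypothesis hcv : Un_cv (fun n => nrm p (vminus (T (ev (phi n))) y)) 0.

Lemma phi_mono a b : (a < b)%nat -> (phi a < phi b)%nat.
Proof. intro h; induction h; [apply hphi|specialize (hphi m); lia]. Qed.

Definition fd (a b : nat) := vminus (ev (phi a)) (ev (phi b)).

Definition stepP (i m N a b m' : nat) : Prop :=
  (N <= a)%nat /\ (a < b)%nat /\ (m < m')%nat /\
  nrm p (T (fd a b)) <= dl i /\
  (exists l, infinite_sum (head m (ps q (J (fd a b)))) l /\ l <= tau i) /\
  (exists l, infinite_sum (tail m' (ps q (J (fd a b)))) l /\ l <= tau i).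

Lemma fd_memb a b : memb p (fd a b).
Proof. unfold fd. apply lp_minus; auto; apply ev_memb; auto. Qed.

Lemma step_ex i m N : exists a b m', stepP i m N a b m'.
Proof.
  destruct (hcv (dl i / 2)) as [NT hNT]. pose proof (dl_pos i); lra.
  set (s := fun k n => if Nat.even k then fst (J (ev (phi n)) (Nat.div2 k)) else snd (J (ev (phi n)) (Nat.div2 k))).
  set (c := tau i / (INR m + 1)).
  assert (hc : 0 < c) by (unfold c; apply Rdiv_lt_0_compat; [apply tau_pos|pose proof (pos_INR m); lra]).
  set (eta := rpow c (1/q) / 2).
  assert (heta : 0 < eta) by (unfold eta; apply Rdiv_lt_0_compat; [apply rpow_gt0; auto|lra]).
  destruct (ph_multi s (Rabs C1) eta (2*m) (fun n => (NT <= n)%nat /\ (N <= n)%nat)) as [P' [hP1 [hP2 hP3]]]; auto.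
  - intro N0. exists (max N0 (max NT N)); repeat split; lia.
  - intros k n _. destruct (ev_memb p (phi n) hp) as [hm hn].
    assert (Cabs (J (ev (phi n)) (Nat.div2 k)) <= Rabs C1).
    { pose proof (coord_le q (J (ev (phi n))) (Nat.div2 k) hq (hJm _ hm)).
      pose proof (hJb _ hm). rewrite hn, Rmult_1_r in H0. pose proof (Rle_abs C1). lra. }
    unfold s; destruct (Nat.even k).
    + eapply Rle_trans; [apply Cabs_re|auto].
    + eapply Rle_trans; [apply Cabs_im|auto].
  - destruct (unb_two P' N hP2) as [a [b [hNa [hab [pa pb]]]]].
    set (g := J (fd a b)).
    assert (hg : memb q g) by (apply hJm, fd_memb).
    destruct hg as [Sg hSg].
    destruct (tail_small (ps q g) Sg (tau i) (ps_ge0 q g) hSg (tau_pos i)) as [m0 hm0].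
    exists a, b, (max m0 (S m)). unfold stepP. split; [auto|]. split; [auto|]. split; [lia|].
    split; [|split].
    + unfold fd. rewrite T_minus by (apply ev_memb; auto).
      rewrite (vminus_shift _ _ y).
      assert (mA : memb p (vminus (T (ev (phi a))) y)) by (apply lp_minus; auto; apply hTm, ev_memb; auto).
      assert (mB : memb p (vminus (T (ev (phi b))) y)) by (apply lp_minus; auto; apply hTm, ev_memb; auto).
      destruct (lp_minus p _ _ hp mA mB) as [_ h].
      destruct (hP1 a pa) as [ha1 _]. destruct (hP1 b pb) as [hb1 _].
      pose proof (hNT a ha1) as e1. pose proof (hNT b hb1) as e2. unfold Rdist in e1, e2.
      rewrite Rminus_0_r, Rabs_right in e1, e2 by apply Rle_ge, nrm_ge0. lra.
    + destruct (head_small (ps q g) m c (ps_ge0 q g) (Rlt_le _ _ hc)) as [l [hl1 hl2]].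
      * intros j hj. unfold g, ps. unfold fd. rewrite J_minus by (apply ev_memb; auto).
        pose proof (hP3 a b (2*j)%nat ltac:(lia) pa pb) as r1.
        pose proof (hP3 a b (2*j+1)%nat ltac:(lia) pa pb) as r2.
        unfold s in r1, r2. rewrite Nat.even_even, Nat.div2_even in r1. rewrite Nat.even_odd, Nat.div2_odd' in r2.
        set (u := J (ev (phi a)) j) in *. set (v := J (ev (phi b)) j) in *.
        assert (Cabs (vminus (J (ev (phi a))) (J (ev (phi b))) j) <= 2 * eta).
        { unfold vminus, vplus, vneg. fold u v. eapply Rle_trans; [apply Cabs_le_reim|].
          unfold Cadd, Copp; simpl. unfold Rminus in r1, r2. lra. }
        replace c with (rpow (2*eta) q). apply rpow_le; [split; [apply Cabs_ge0|auto]|lra].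
        unfold eta. replace (2 * (rpow c (1/q) / 2)) with (rpow c (1/q)) by field.
        rewrite rpow_comp by lra. replace (1/q*q) with 1 by (field; lra). apply rpow_1; lra.
      * exists l; split; auto. eapply Rle_trans; [apply hl2|]. unfold c.
        pose proof (pos_INR m). pose proof (tau_pos i).
        apply (Rmult_le_reg_r (INR m + 1)); [lra|]. field_simplify; lra.
    + apply hm0; lia.
Qed.

Definition pick (i m N : nat) : nat * nat * nat :=
  epsilon (inhabits (0%nat, 0%nat, 0%nat)) (fun t => stepP i m N (fst (fst t)) (snd (fst t)) (snd t)).

Lemma pick_spec i m N : stepP i m N (fst (fst (pick i m N))) (snd (fst (pick i m N))) (snd (pick i m N)).
Proof.
  unfold pick. apply (epsilon_spec (inhabits (0%nat, 0%nat, 0%nat)) (fun t => stepP i m N (fst (fst t)) (snd (fst t)) (snd t))).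
  destruct (step_ex i m N) as [a [b [m' h]]]. exists (a, b, m'); auto.
Qed.

Fixpoint st (i : nat) : nat * nat :=
  match i with
  | O => (0%nat, 0%nat)
  | S i' => (snd (pick i' (fst (st i')) (snd (st i'))), S (snd (fst (pick i' (fst (st i')) (snd (st i'))))))
  end.

Definition Ai i := fst (fst (pick i (fst (st i)) (snd (st i)))).
Definition Bi i := snd (fst (pick i (fst (st i)) (snd (st i)))).
Definition Mi i := fst (st i).

Lemma st_spec i : stepP i (Mi i) (snd (st i)) (Ai i) (Bi i) (Mi (S i)).
Proof. change (Mi (S i)) with (snd (pick i (fst (st i)) (snd (st i)))). apply pick_spec. Qed.

Lemma AB i : (Ai i < Bi i)%nat.
Proof. apply (st_spec i). Qed.
Lemma BA i : (Bi i < Ai (S i))%nat.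
Proof. destruct (st_spec (S i)) as [h _]. simpl in h. unfold Bi; lia. Qed.
Lemma M_lt i : (Mi i < Mi (S i))%nat.
Proof. apply (st_spec i). Qed.
Lemma M_le i j : (i <= j)%nat -> (Mi i <= Mi j)%nat.
Proof. intro h; induction h; auto. pose proof (M_lt m); lia. Qed.

Definition ff i := fd (Ai i) (Bi i).
Definition gg i := J (ff i).
Definition win i j := andb (Nat.leb (Mi i) j) (Nat.ltb j (Mi (S i))).
Definition hh i : nat -> C := fun j => if win i j then gg i j else C0.
Definition rr i : nat -> C := fun j => if win i j then C0 else gg i j.

Lemma ev_zero n k : k <> n -> ev n k = C0.
Proof. intro h; unfold ev. destruct (Nat.eqb_spec k n); [lia|auto]. Qed.

Lemma ff_zero i k : (k < phi (Ai i) \/ phi (Bi i) < k)%nat -> ff i k = C0.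
Proof.
  intro h. pose proof (phi_mono _ _ (AB i)).
  unfold ff, fd, vminus, vplus, vneg. rewrite !ev_zero by lia. unfold Cadd, Copp, C0; simpl; f_equal; ring.
Qed.

Lemma ff_memb i : memb p (ff i).
Proof. apply fd_memb. Qed.

Lemma ff_sum i : infinite_sum (ps p (ff i)) 2.
Proof. apply isum_evdiff; auto. pose proof (phi_mono _ _ (AB i)); lia. Qed.

Lemma ff_nrm i : nrm p (ff i) = rpow 2 (1/p).
Proof. apply nrm_eq, ff_sum. Qed.

Lemma two_pow_ge1 : 1 <= rpow 2 (1/p).
Proof. pose proof (rpow_le 1 2 (1/p)) as H0. rewrite rpow_one in H0. apply H0; [lra|]. left; apply Rdiv_lt_0_compat; lra. Qed.

Lemma gg_memb i : memb q (gg i).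
Proof. apply hJm, ff_memb. Qed.

Lemma gg_lo i : / (2 * M) <= nrm q (gg i).
Proof.
  pose proof (hlow _ (ff_memb i)) as H0. rewrite ff_nrm in H0. pose proof two_pow_ge1.
  destruct (st_spec i) as [_ [_ [_ [hT _]]]]. fold (ff i) in hT.
  assert (K * nrm p (T (ff i)) <= / 2).
  { eapply Rle_trans. apply Rmult_le_compat_l; [auto|apply hT].
    unfold dl, delta. assert ((/2)^i <= 1) by (apply pow_le1'; lra).
    assert (0 < /(2*(K+1))) by (apply Rinv_0_lt_compat; lra).
    assert (K * / (2 * (K+1)) <= /2) by (apply (Rmult_le_reg_r (2*(K+1))); [lra|]; field_simplify; lra).
    assert (0 <= (/2)^i) by (apply pow_le; lra). nra. }
  fold (gg i) in H0. apply (Rmult_le_reg_l M); auto.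
  replace (M * / (2 * M)) with (/2) by (field; lra). lra.
Qed.

Definition hi := Rabs C1 * rpow 2 (1/p).

Lemma gg_hi i : nrm q (gg i) <= hi.
Proof.
  pose proof (hJb _ (ff_memb i)) as H0. rewrite ff_nrm in H0. unfold hi.
  pose proof (Rle_abs C1). pose proof two_pow_ge1. fold (gg i) in H0. nra.
Qed.

Lemma gg_split i : gg i = vplus (hh i) (rr i).
Proof.
  apply functional_extensionality; intro j. unfold vplus, hh, rr. destruct (win i j); [rewrite Cadd_0_r|rewrite Cadd_0_l]; auto.
Qed.

Lemma hh_le i j : Cabs (hh i j) <= Cabs (gg i j).
Proof. unfold hh; destruct (win i j); [lra|rewrite Cabs_C0; apply Cabs_ge0]. Qed.
Lemma rr_le i j : Cabs (rr i j) <= Cabs (gg i j).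
Proof. unfold rr; destruct (win i j); [rewrite Cabs_C0; apply Cabs_ge0|lra]. Qed.

Lemma hh_memb i : memb q (hh i).
Proof. apply (memb_le q _ (gg i)); [lra|apply hh_le|apply gg_memb]. Qed.
Lemma rr_memb i : memb q (rr i).
Proof. apply (memb_le q _ (gg i)); [lra|apply rr_le|apply gg_memb]. Qed.

Lemma rr_nrm i : nrm q (rr i) <= eps i.
Proof.
  destruct (st_spec i) as [_ [_ [_ [_ [[l1 [h1 e1]] [l2 [h2 e2]]]]]]]. fold (ff i) (gg i) in h1, h2.
  assert (hpt : forall n, 0 <= ps q (rr i) n <= head (Mi i) (ps q (gg i)) n + tail (Mi (S i)) (ps q (gg i)) n).
  { intro n. split; [apply ps_ge0|]. unfold ps, rr, head, tail, win.
    pose proof (rpow_ge0 (Cabs (gg i n)) q).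
    destruct (Nat.leb_spec (Mi i) n), (Nat.ltb_spec n (Mi (S i))), (Nat.ltb_spec n (Mi i)), (Nat.leb_spec (Mi (S i)) n);
      simpl; try (rewrite Cabs_C0, rpow_0); try lra; exfalso; lia. }
  destruct (compare_sum _ _ _ hpt (isum_plus _ _ _ _ h1 h2)) as [S0 [hS0 hle]].
  rewrite (nrm_eq _ _ _ hS0). replace (eps i) with (rpow (2 * tau i) (1/q)).
  apply rpow_le; [split; [eapply isum_ge0; [apply ps_ge0|eauto]|lra]|left; apply Rdiv_lt_0_compat; lra].
  unfold tau. replace (2 * (rpow (eps i) q / 2)) with (rpow (eps i) q) by field. apply rpow_inv; [left; apply eps_pos|lra].
Qed.

Definition lo := / (4 * M).

Lemma hh_lo i : lo <= nrm q (hh i).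
Proof.
  pose proof (gg_lo i). pose proof (rr_nrm i).
  destruct (lp_add q (hh i) (rr i) hq (hh_memb i) (rr_memb i)) as [_ h]. rewrite <- gg_split in h.
  assert (eps i <= lo).
  { unfold eps, lo. simpl. assert (rho <= / (4*M)) by apply Rmin_r.
    assert ((/2)^i <= 1) by (apply pow_le1'; lra). assert (0 <= (/2)^i) by (apply pow_le; lra).
    pose proof rho_pos. nra. }
  assert (/ (2*M) = 2 * lo) by (unfold lo; field; lra). lra.
Qed.

Lemma hh_hi i : nrm q (hh i) <= hi.
Proof. eapply Rle_trans; [apply memb_le; [lra|apply hh_le|apply gg_memb]|apply gg_hi]. Qed.

Lemma lo_pos : 0 < lo.
Proof. unfold lo; apply Rinv_0_lt_compat; lra. Qed.

Lemma hh_zero i j : (j < Mi i \/ Mi (S i) <= j)%nat -> hh i j = C0.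
Proof. intro h. unfold hh, win. destruct (Nat.leb_spec (Mi i) j), (Nat.ltb_spec j (Mi (S i))); simpl; auto; exfalso; lia. Qed.

Fixpoint W (N : nat) : nat -> C := match N with O => z0 | S N' => vplus (W N') (ff N') end.
Fixpoint HH (N : nat) : nat -> C := match N with O => z0 | S N' => vplus (HH N') (hh N') end.
Fixpoint RR (N : nat) : nat -> C := match N with O => z0 | S N' => vplus (RR N') (rr N') end.

Lemma W_facts N : memb p (W N) /\ infinite_sum (ps p (W N)) (2 * INR N) /\
  forall k, (phi (Ai N) <= k)%nat -> W N k = C0.
Proof.
  induction N as [|N [h1 [h2 h3]]].
  - simpl. destruct (z0_memb p) as [hm _]. split; auto. split.
    + replace (2*0) with 0 by ring. eapply isum_ext; [|exact isum_zero]. intro; unfold ps, z0; rewrite Cabs_C0, rpow_0; auto.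
    + intros; unfold z0; auto.
  - pose proof (phi_mono _ _ (AB N)). pose proof (phi_mono _ _ (BA N)).
    simpl W. split; [apply lp_add; auto; apply ff_memb|]. split.
    + rewrite S_INR. replace (2 * (INR N + 1)) with (2 * INR N + 2) by ring. apply isum_disj; auto; [lra| |apply ff_sum].
      intro k. destruct (le_lt_dec (phi (Ai N)) k); [left; auto|right; apply ff_zero; lia].
    + intros k hk. unfold vplus. rewrite h3 by lia. rewrite ff_zero by lia. apply Cadd_0_r.
Qed.

Lemma T_z0 : T z0 = z0.
Proof.
  assert (e : z0 = vsc C0 z0) by (apply functional_extensionality; intro; unfold z0, vsc, Cmul, C0; simpl; f_equal; ring).
  rewrite e, hTsc by apply z0_memb. apply functional_extensionality; intro; unfold z0, vsc, Cmul, C0; simpl; f_equal; ring.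
Qed.

Lemma TW N : nrm p (T (W N)) <= 2 * delta - 2 * delta * (/2) ^ N.
Proof.
  induction N.
  - simpl. rewrite T_z0. destruct (z0_memb p) as [_ e]; rewrite e; lra.
  - simpl W. destruct (W_facts N) as [hW _]. rewrite hTadd by (auto; apply ff_memb).
    destruct (lp_add p _ _ hp (hTm _ hW) (hTm _ (ff_memb N))) as [_ h].
    destruct (st_spec N) as [_ [_ [_ [hT _]]]]. fold (ff N) in hT. unfold dl in hT.
    simpl pow. lra.
Qed.

Lemma JW N : J (W N) = vplus (HH N) (RR N).
Proof.
  induction N.
  - simpl. rewrite J_z0. apply functional_extensionality; intro; unfold vplus, z0; rewrite Cadd_0_r; auto.
  - simpl. destruct (W_facts N) as [hW _]. rewrite hJadd by (auto; apply ff_memb). rewrite IHN.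
    fold (gg N). rewrite gg_split. apply functional_extensionality; intro j; unfold vplus.
    destruct (HH N j), (RR N j), (hh N j), (rr N j); unfold Cadd; simpl; f_equal; ring.
Qed.

Lemma HH_facts N : memb q (HH N) /\
  (exists S0, infinite_sum (ps q (HH N)) S0 /\ INR N * rpow lo q <= S0 <= INR N * rpow hi q) /\
  forall j, (Mi N <= j)%nat -> HH N j = C0.
Proof.
  induction N as [|N [h1 [[S0 [h2 h2']] h3]]].
  - simpl. destruct (z0_memb q) as [hm _]. split; auto. split.
    + exists 0. split; [eapply isum_ext; [|exact isum_zero]; intro; unfold ps, z0; rewrite Cabs_C0, rpow_0; auto|lra].
    + intros; unfold z0; auto.
  - simpl HH. pose proof (M_lt N). split; [apply lp_add; auto; apply hh_memb|]. split.
    + destruct (hh_memb N) as [Sh hSh].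
      exists (S0 + Sh). split.
      * apply isum_disj; auto; [lra|]. intro j. destruct (le_lt_dec (Mi N) j); [left; auto|right; apply hh_zero; lia].
      * assert (e : rpow (nrm q (hh N)) q = Sh) by (apply nrm_pow; auto).
        pose proof (hh_lo N). pose proof (hh_hi N). pose proof lo_pos.
        assert (rpow lo q <= Sh) by (rewrite <- e; apply rpow_le; lra).
        assert (Sh <= rpow hi q) by (rewrite <- e; apply rpow_le; [split; [lra|auto]|lra]).
        rewrite S_INR. lra.
    + intros j hj. unfold vplus. rewrite h3 by lia. rewrite hh_zero by lia. apply Cadd_0_r.
Qed.

Lemma RR_facts N : memb q (RR N) /\ nrm q (RR N) <= rho - rho * (/2) ^ N.
Proof.
  induction N as [|N [h1 h2]].
  - simpl. destruct (z0_memb q) as [hm e]. rewrite e; split; auto; lra.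
  - simpl RR. destruct (lp_add q _ _ hq h1 (rr_memb N)) as [hm h]. split; auto.
    pose proof (rr_nrm N). unfold eps in H. simpl pow in *. lra.
Qed.

Lemma core_false : False.
Proof.
  assert (hlo := lo_pos). pose proof rho_pos as hrho. assert (rho <= 1) by apply Rmin_l.
  pose proof two_pow_ge1 as ht.
  assert (hip : 0 < 1/p) by (apply Rdiv_lt_0_compat; lra).
  assert (hiq : 0 < 1/q) by (apply Rdiv_lt_0_compat; lra).
  assert (main : forall N, rpow (INR N) (1/p) <= M * hi * rpow (INR N) (1/q) + (M + 1) /\
                 lo * rpow (INR N) (1/q) <= Rabs C1 * rpow 2 (1/p) * rpow (INR N) (1/p) + 1).
  { intro N. destruct (W_facts N) as [hW [hWs _]]. destruct (HH_facts N) as [hH [[S0 [hS0 hb]] _]].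
    destruct (RR_facts N) as [hR hRn].
    assert (eW : nrm p (W N) = rpow 2 (1/p) * rpow (INR N) (1/p)).
    { rewrite (nrm_eq _ _ _ hWs). apply rpow_mul; [lra|apply pos_INR]. }
    assert (eH1 : lo * rpow (INR N) (1/q) <= nrm q (HH N)).
    { rewrite (nrm_eq _ _ _ hS0). replace lo with (rpow (rpow lo q) (1/q)) by (apply rpow_inv; lra).
      rewrite Rmult_comm, <- rpow_mul; [|apply pos_INR|apply rpow_ge0].
      apply rpow_le; [|lra]. split; [apply Rmult_le_pos; [apply pos_INR|apply rpow_ge0]|lra]. }
    assert (eH2 : nrm q (HH N) <= hi * rpow (INR N) (1/q)).
    { rewrite (nrm_eq _ _ _ hS0). assert (0 <= hi) by (unfold hi; pose proof (Rabs_pos C1); nra).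
      replace hi with (rpow (rpow hi q) (1/q)) by (apply rpow_inv; lra).
      rewrite Rmult_comm, <- rpow_mul; [|apply pos_INR|apply rpow_ge0].
      apply rpow_le; [|lra]. split; [eapply isum_ge0; [apply ps_ge0|eauto]|lra]. }
    assert (hRn' : nrm q (RR N) <= 1).
    { assert (0 <= rho * (/2)^N) by (apply Rmult_le_pos; [lra|apply pow_le; lra]). lra. }
    destruct (lp_add q _ _ hq hH hR) as [_ eJ1]. rewrite <- JW in eJ1.
    assert (eJ2 : nrm q (HH N) <= nrm q (J (W N)) + nrm q (RR N)).
    { replace (HH N) with (vminus (J (W N)) (RR N)). apply lp_minus; auto.
      rewrite JW. apply functional_extensionality; intro j. unfold vminus, vplus, vneg.
      destruct (HH N j), (RR N j); unfold Cadd, Copp; simpl; f_equal; ring. }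
    pose proof (hlow _ hW) as l1. pose proof (hJb _ hW) as l2. pose proof (TW N) as l3.
    assert (K * nrm p (T (W N)) <= 1).
    { assert (0 <= 2 * delta * (/2)^N) by (pose proof delta_pos; apply Rmult_le_pos; [lra|apply pow_le; lra]).
      assert (K * (2 * delta) <= 1) by (unfold delta; apply (Rmult_le_reg_r (2*(K+1))); [lra|]; field_simplify; lra).
      pose proof (nrm_ge0 p (T (W N))). nra. }
    rewrite eW in l1, l2. pose proof (Rle_abs C1). pose proof (rpow_ge0 (INR N) (1/p)).
    pose proof (nrm_ge0 q (J (W N))).
    split.
    - assert (rpow (INR N) (1/p) <= rpow 2 (1/p) * rpow (INR N) (1/p)) by nra. nra.
    - assert (C1 * (rpow 2 (1/p) * rpow (INR N) (1/p)) <= Rabs C1 * rpow 2 (1/p) * rpow (INR N) (1/p)).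
      { rewrite <- Rmult_assoc. apply Rmult_le_compat_r; auto. apply Rmult_le_compat_r; lra. }
      lra. }
  destruct (Rlt_or_le p q) as [hlt|hge].
  - assert (1/q < 1/p) by (unfold Rdiv; rewrite !Rmult_1_l; apply Rinv_lt_contravar; nra).
    destruct (growth (1/p) (1/q) (M*hi) (M+1)) as [N hN]; [lra|].
    destruct (main N); lra.
  - assert (hlt : q < p) by lra.
    assert (1/p < 1/q) by (unfold Rdiv; rewrite !Rmult_1_l; apply Rinv_lt_contravar; nra).
    destruct (growth (1/q) (1/p) (Rabs C1 * rpow 2 (1/p) / lo) (1/lo)) as [N hN]; [lra|].
    destruct (main N) as [_ h].
    apply (Rmult_lt_compat_l lo) in hN; auto.
    replace (lo * (Rabs C1 * rpow 2 (1 / p) / lo * rpow (INR N) (1 / p) + 1 / lo)) with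
      (Rabs C1 * rpow 2 (1 / p) * rpow (INR N) (1 / p) + 1) in hN by (field; lra).
    lra.
Qed.
End Core.

Lemma bounded_pos (V W : VS) f : bounded_op V W f -> (forall x, @mem V x -> 0 <= vnorm x) ->
  exists M, 0 < M /\ forall x, mem x -> vnorm (f x) <= M * vnorm x.
Proof.
  intros [_ [_ [_ [M hM]]]] hn. exists (Rabs M + 1). split; [pose proof (Rabs_pos M); lra|].
  intros x hx. specialize (hM x hx). specialize (hn x hx). pose proof (Rle_abs M). nra.
Qed.

Lemma banach_zero (V : VS) : is_banach V ->
  (forall c, vscal c (@vzero V) = vzero) /\ vadd (@vzero V) vzero = vzero /\ vnorm (@vzero V) = 0.
Proof.
  intros [m0 [madd [mopp [msc [assoc [comm [add0 [addopp [sc1 [scm [scadd [scadd2 [n0 [neq [nsc _]]]]]]]]]]]]]]].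
  assert (e1 : vadd (@vzero V) vzero = vzero) by (apply add0; auto).
  assert (e2 : forall c, vscal c (@vzero V) = vzero).
  { intro c. set (u := vscal c (@vzero V)). assert (hu : mem u) by (apply msc; auto).
    assert (uu : u = vadd u u) by (unfold u; rewrite <- scadd; auto; rewrite e1; auto).
    transitivity (vadd (vadd u u) (vopp u)).
    - rewrite <- assoc by auto. rewrite (addopp u hu), (add0 u hu). reflexivity.
    - rewrite <- uu. apply addopp; auto. }
  split; auto. split; auto.
  pose proof (nsc C0 vzero m0) as H0. rewrite e2, Cabs_C0, Rmult_0_l in H0; auto.
Qed.

Lemma dsum_nrm_z p (X' : VS) x : is_banach X' -> 1 <= p ->
  @vnorm (dsum (lp p) X') (x, vzero) = nrm p x.
Proof.
  intros hb hp. change (@vnorm (dsum (lp p) X') (x, vzero)) with (sqrt (nrm p x ^ 2 + (@vnorm X' vzero) ^ 2)).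
  destruct (banach_zero X' hb) as [_ [_ e]]. rewrite e.
  replace (nrm p x ^ 2 + 0 ^ 2) with (nrm p x ^ 2) by ring. apply sqrt_pow2, nrm_ge0.
Qed.

Lemma sqrt_fst a b : 0 <= a -> a <= sqrt (a ^ 2 + b ^ 2).
Proof. intro h. rewrite <- (sqrt_pow2 a) at 1 by auto. apply sqrt_le_1_alt. nra. Qed.
Lemma sqrt_snd a b : 0 <= b -> b <= sqrt (a ^ 2 + b ^ 2).
Proof. intro h. rewrite <- (sqrt_pow2 b) at 1 by auto. apply sqrt_le_1_alt. nra. Qed.
Lemma sqrt_sum a b : 0 <= a -> 0 <= b -> sqrt (a ^ 2 + b ^ 2) <= a + b.
Proof. intros. rewrite <- (sqrt_pow2 (a+b)) by lra. apply sqrt_le_1_alt. nra. Qed.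

Lemma main_core p q (hp : 1 <= p) (hq : 1 <= q) (hpq : p <> q) (X' Y' : VS)
  (hX' : is_banach X') (hY' : is_banach Y')
  (T : car (lp p) -> car (lp p)) (S : car (lp q) -> car (lp q))
  (hT : bounded_op (lp p) (lp p) T) (hS : bounded_op (lp q) (lp q) S)
  (hc : compact_op (lp p) (lp p) T)
  (E : car (dsum (lp q) Y') -> car (dsum (lp p) X')) (F : car (dsum (lp p) X') -> car (dsum (lp q) Y'))
  (gE : car (dsum (lp p) X') -> car (dsum (lp q) Y')) (gF : car (dsum (lp q) Y') -> car (dsum (lp p) X'))
  (hgE : bounded_op _ _ gE) (hgEE : forall z, mem z -> gE (E z) = z)
  (hF : bounded_op _ _ F) (hgF : bounded_op _ _ gF) (hgFF : forall z, mem z -> gF (F z) = z)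
  (heq : forall z, @mem (dsum (lp p) X') z -> op_dsum_id X' T z = E (op_dsum_id Y' S (F z))) : False.
Proof.
  destruct (banach_zero X' hX') as [zsc [zadd zn]].
  assert (zm : @mem X' vzero) by apply hX'.
  assert (ny' : forall v, @mem Y' v -> 0 <= vnorm v) by apply hY'.
  set (J := fun w : nat -> C => fst (F (w, @vzero X'))).
  destruct hT as [hTm [hTadd [hTsc _]]].
  destruct (bounded_pos _ _ F hF) as [MF [hMF hFb]]; [intros; apply sqrt_pos|].
  destruct hF as [hFm [hFadd [hFsc _]]].
  destruct (bounded_pos _ _ gF hgF) as [MG [hMG hGb]]; [intros; apply sqrt_pos|].
  destruct (bounded_pos _ _ gE hgE) as [ME [hME hEb]]; [intros; apply sqrt_pos|].
  assert (hJm : forall x, memb p x -> memb q (J x)).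
  { intros x hx. apply (hFm (x, vzero)). split; auto. }
  assert (hJadd : forall x y, memb p x -> memb p y -> J (vplus x y) = vplus (J x) (J y)).
  { intros x y hx hy. unfold J. pose proof (hFadd (x, vzero) (y, vzero) (conj hx zm) (conj hy zm)) as h.
    simpl in h. rewrite zadd in h. unfold vplus. rewrite h. reflexivity. }
  assert (hJsc : forall c x, memb p x -> J (vsc c x) = vsc c (J x)).
  { intros c x hx. unfold J. pose proof (hFsc c (x, vzero) (conj hx zm)) as h.
    simpl in h. rewrite zsc in h. unfold vsc. rewrite h. reflexivity. }
  assert (hJb : forall x, memb p x -> nrm q (J x) <= MF * nrm p x).
  { intros x hx. pose proof (hFb (x, vzero) (conj hx zm)) as h. rewrite dsum_nrm_z in h by auto.
    eapply Rle_trans; [|exact h]. unfold J. destruct (F (x, vzero)) as [u v] eqn:Eq.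
    destruct (hFm (x, vzero) (conj hx zm)) as [hu hv]. rewrite Eq in hu, hv. simpl in hu, hv |- *.
    apply sqrt_fst. apply nrm_ge0. }
  assert (hlow : forall x, memb p x -> nrm p x <= MG * nrm q (J x) + (MG * ME) * nrm p (T x)).
  { intros x hx. set (z := (x, @vzero X')). assert (hz : @mem (dsum (lp p) X') z) by (split; auto).
    pose proof (hGb (F z) (hFm z hz)) as h1. rewrite hgFF in h1 by auto. unfold z in h1. rewrite dsum_nrm_z in h1 by auto.
    fold z in h1.
    assert (hB : mem (op_dsum_id Y' S (F z))).
    { destruct (hFm z hz) as [hu hv]. split; [apply hS; auto|auto]. }
    pose proof (hEb (T x, vzero) (conj (hTm x hx) zm)) as h2.
    assert (e : gE (T x, vzero) = op_dsum_id Y' S (F z)).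
    { change (T x, @vzero X') with (op_dsum_id X' T z). rewrite (heq z hz). apply hgEE; auto. }
    rewrite e, dsum_nrm_z in h2 by auto.
    unfold J. fold z. destruct (F z) as [u v] eqn:Eq. destruct (hFm z hz) as [hu hv]. rewrite Eq in hu, hv.
    simpl in hu, hv.
    change (@vnorm (dsum (lp q) Y') (u, v)) with (sqrt (nrm q u ^ 2 + vnorm v ^ 2)) in h1.
    change (@vnorm (dsum (lp q) Y') (op_dsum_id Y' S (u, v))) with (sqrt (nrm q (S u) ^ 2 + vnorm v ^ 2)) in h2.
    change (fst (u, v)) with u.
    pose proof (nrm_ge0 q u). pose proof (ny' v hv).
    pose proof (sqrt_snd (nrm q (S u)) (vnorm v) (ny' v hv)).
    pose proof (sqrt_sum (nrm q u) (vnorm v) (nrm_ge0 q u) (ny' v hv)).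
    assert (vnorm v <= ME * nrm p (T x)) by lra.
    assert (MG * sqrt (nrm q u ^ 2 + vnorm v ^ 2) <= MG * (nrm q u + vnorm v)) by (apply Rmult_le_compat_l; lra).
    assert (MG * vnorm v <= MG * (ME * nrm p (T x))) by (apply Rmult_le_compat_l; lra). lra. }
  destruct (hc (fun n => ev n)) as [phi [y [h1 [h2 h3]]]].
  { intro n; destruct (ev_memb p n hp) as [m1 m2]; split; [exact m1|rewrite vnorm_lp; lra]. }
  apply (core_false p q hp hq hpq T J hTm hTadd hTsc hJm hJadd hJsc MF MG (MG * ME) hJb hMG ltac:(nra) hlow phi y h1 h2 h3).
Qed.

Theorem proposition4p5 (p q : R) (hp : 1 <= p) (hq : 1 <= q) (hpq : p <> q)
  (T : car (lp p) -> car (lp p)) (S : car (lp q) -> car (lp q))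
  (hT : bounded_op (lp p) (lp p) T) (hS : bounded_op (lp q) (lp q) S)
  (hc : compact_op (lp p) (lp p) T \/ compact_op (lp q) (lp q) S) :
  ~ equiv_after_ext (lp p) (lp q) T S.
Proof.
  intros [X' [Y' [hX' [hY' [E [F [hE [hF heq]]]]]]]].
  destruct hE as [hEb [gE [hgE [hgEE hEgE]]]]. destruct hF as [hFb [gF [hgF [hgFF hFgF]]]].
  destruct hc as [hcT|hcS].
  - exact (main_core p q hp hq hpq X' Y' hX' hY' T S hT hS hcT E F gE gF hgE hgEE hFb hgF hgFF heq).
  - apply (main_core q p hq hp (not_eq_sym hpq) Y' X' hY' hX' S T hS hT hcS gE gF E F hEb hEgE hgF hFb hFgF).
    intros z hz. assert (hgz : mem (gF z)) by (apply hgF; auto).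
    rewrite (heq (gF z) hgz). rewrite hFgF by auto. rewrite hgEE; auto.
    destruct hz as [hz1 hz2]. split; [apply hS; auto|auto].
Qed.
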